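(* Let $\Gamma$ be a 3-colex, $c\in\{r,b,g,y\}$, and let $s$ be the syndrome of an $X$-error on the 3D color code on $\Gamma$. Let $\pi_c(s)$ be the restriction of $s$ to the edges of $\Gamma^{*\setminus c}$. Then $\pi_c(s)$ is a valid syndrome for an $X$-error on the 3D toric code on $\Gamma^{*\setminus c}$, i.e. there exists an $X$-error on the faces of $\Gamma^{*\setminus c}$ whose toric-code syndrome is $\pi_c(s)$.
   Context: Colors are $\{r,b,g,y\}$. A 3-colex $\Gamma$ is a 3-dimensional cell complex without boundary in which every vertex is 4-valent and lies in exactly four 3-cells, and whose 3-cells are properly 4-colored: every face lies in exactly two 3-cells, which have different colors. The dual complex $\Gamma^*$ has an $i$-cell for every $(3-i)$-cell of $\Gamma$, with incidences reversed; every 3-cell of $\Gamma^*$ is a tetrahedron. A vertex of $\Gamma^*$ is given the color of the corresponding 3-cell of $\Gamma$, so the four vertices of each tetrahedron have distinct colors. A face of $\Gamma^*$ is a $c$-face if none of its vertices has color $c$. The 3D color code on $\Gamma$ has one qubit per tetrahedron $\nu$ of $\Gamma^*$, $X$-stabilizer generators $\prod_{\nu\ni v}X_\nu$ for vertices $v$ and $Z$-stabilizer generators $\prod_{\nu\supset e}Z_\nu$ for edges $e$ of $\Gamma^*$. The syndrome of an $X$-error $\prod_{\nu\in\Omega}X_\nu$ is the function on edges $s_e=|\{\nu\in\Omega:e\subset\nu\}|\bmod 2$. The minor complex $\Gamma^{*\setminus c}$ is obtained from $\Gamma^*$ by deleting all vertices of color $c$ together with all edges and faces incident to them (its faces are the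 $c$-faces of $\Gamma^*$). The 3D toric code on $\Gamma^{*\setminus c}$ has qubits on faces and $Z$-checks $\prod_{f\supset e}Z_f$ on edges; the syndrome of an $X$-error on faces is, at each edge $e$, the parity of the number of error faces containing $e$. *)

(* Defs.v *)
From HB Require Import structures.
From mathcomp Require Import all_boot.
Set Implicit Arguments. Unset Strict Implicit. Unset Printing Implicit Defensive.

Inductive color := cr | cb | cg | cy.

Definition color_to_ord (c : color) : 'I_4 :=
  match c with cr => inord 0 | cb => inord 1 | cg => inord 2 | cy => inord 3 end.
Definition ord_to_color (i : 'I_4) : color :=
  match val i with 0 => cr | 1 => cb | 2 => cg | _ => cy end.
Lemma color_toK : cancel color_to_ord ord_to_color.
Proof. by case; rewrite /ord_to_color /= inordK. Qed.
HB.instance Definition _ := Finite.copy color (can_type color_toK).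

(* The dual complex Gamma^*, given by its cells of each dimension and the
   cell incidences (covering relations of its face poset):
   v_in_e v e : vertex v is a vertex of edge e;
   e_in_f e f : edge e lies on the boundary of face f;
   f_in_t f t : face f lies on the boundary of the 3-cell t.
   vcol v is the color of the 3-cell of Gamma dual to v. *)
Record dual_complex := DualComplex {
  vtx : finType; edg : finType; fac : finType; tet : finType;
  vcol : vtx -> color;
  v_in_e : vtx -> edg -> bool;
  e_in_f : edg -> fac -> bool;
  f_in_t : fac -> tet -> bool
}.

Section Cells.
Variable D : dual_complex.

Definition e_in_t (e : edg D) (t : tet D) : bool :=
  [exists f, e_in_f e f && f_in_t f t].

Definition verts_e (e : edg D) : {set vtx D} := [set v | v_in_e v e].
Definition verts_f (f : fac D) : {set vtx D} :=
  [set v | [exists e, v_in_e v e && e_in_f e f]].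
Definition verts_t (t : tet D) : {set vtx D} :=
  [set v | [exists e, v_in_e v e && e_in_t e t]].

(* Combinatorial content of "Gamma^* is the dual of a 3-colex":
   every edge of Gamma^* (dual to a face of Gamma, lying in two 3-cells of
   different colors) has exactly two vertices, of different colors;
   every 3-cell is a tetrahedron whose four vertices have distinct colors, i.e.
   its edges and faces correspond bijectively (via their vertex sets) to the
   2- and 3-element subsets of its vertex set, with edge/face incidence given
   by inclusion of vertex sets;
   every face of Gamma^* (dual to an edge of Gamma, having two endpoints) lies in
   exactly two tetrahedra; the complex is pure. *)
Definition is_colex_dual : Prop :=
  [/\ (forall e : edg D, #|verts_e e| = 2 /\
          {in verts_e e &, forall u v, u != v -> vcol u != vcol v}),
      (forall t : tet D,
          [/\ #|verts_t t| = 4,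
              {in verts_t t &, injective (@vcol D)},
              {in [pred e | e_in_t e t] &, injective verts_e} &
              [set verts_e e | e in [pred e | e_in_t e t]] =
                [set S in powerset (verts_t t) | #|S| == 2]]),
      (forall t : tet D,
          [/\ {in [pred f | f_in_t f t] &, injective verts_f},
              [set verts_f f | f in [pred f | f_in_t f t]] =
                [set S in powerset (verts_t t) | #|S| == 3] &
              (forall e f, f_in_t f t ->
                 e_in_f e f = e_in_t e t && (verts_e e \subset verts_f f))]),
      (forall f : fac D, #|[set t | f_in_t f t]| = 2) &
      ((forall e : edg D, exists f, e_in_f e f) /\
       (forall v : vtx D, exists e, v_in_e v e))].

(* c-faces / c-edges: no vertex of color c; these are the faces / edges
   of the minor complex Gamma^{* \ c}. *)
Definition is_cface (c : color) (f : fac D) : bool :=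
  [forall v, (v \in verts_f f) ==> (vcol v != c)].
Definition is_cedge (c : color) (e : edg D) : bool :=
  [forall v, (v \in verts_e e) ==> (vcol v != c)].

(* syndrome of the color-code X-error prod_{nu in Om} X_nu, at edge e *)
Definition cc_syndrome (Om : {set tet D}) (e : edg D) : bool :=
  odd #|[set t in Om | e_in_t e t]|.

Definition tc_syndrome (Fs : {set fac D}) (e : edg D) : bool :=
  odd #|[set f in Fs | e_in_f e f]|.

End Cells.

(* Main.v *)
Require Import Defs.
From HB Require Import structures.
From mathcomp Require Import all_boot.

Lemma card_color : #|{: color}| = 4.
Proof.
have E : color_to_ord @: [set: color] = [set: 'I_4].
  apply/setP => i.
  rewrite !inE. apply/imsetP. exists (ord_to_color i) => //.
  case: i => [[|[|[|[|i]]]] Hi] //; apply: val_inj; rewrite /= inordK //.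
by rewrite -cardsT -(card_imset _ (can_inj color_toK)) E cardsT card_ord.
Qed.

Lemma odd_sum_odd (T : finType) (F : T -> nat) :
  odd (\sum_x F x) = odd (\sum_x (odd (F x) : nat)).
Proof.
apply: (big_rec2 (fun a b => odd a = odd b)) => // i a b _ IH.
by rewrite !oddD IH oddb.
Qed.

Lemma cardsum (T : finType) (A : {set T}) : #|A| = \sum_x (x \in A : nat).
Proof.
rewrite -sum1_card big_mkcond /=; apply: eq_bigr => x _; by case: (x \in A).
Qed.

Theorem corollary2 (D : dual_complex) (HD : is_colex_dual D) (c : color)
    (Om : {set tet D}) :
  exists Fs : {set fac D},
    (forall f, f \in Fs -> is_cface c f) /\
    (forall e : edg D, is_cedge c e -> tc_syndrome Fs e = cc_syndrome Om e).
Proof.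
case: HD => He Ht Hf Hft [Hep Hvp].
pose S (t : tet D) := [set v in verts_t t | vcol v != c].
pose R (t : tet D) (f : fac D) := f_in_t f t && (verts_f f == S t).
have uniqR : forall t f g, R t f -> R t g -> f = g.
  move=> t f g /andP[ft /eqP Ef] /andP[gt /eqP Eg].
  case: (Hf t) => Hinj _ _; apply: Hinj; rewrite ?inE //.
  by rewrite Ef Eg.
have exR : forall t, exists f, R t f.
  move=> t; case: (Ht t) => H4 Hinj _ _.
  have Hc : c \in (@vcol D) @: verts_t t.
    have -> : (@vcol D) @: verts_t t = [set: color]; last by rewrite inE.
    apply/eqP; rewrite eqEcard subsetT cardsT card_color.
    by rewrite card_in_imset // H4.
  case/imsetP: Hc => vc Hvc Evc.
  have ES : S t = verts_t t :\ vc.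
    apply/setP => v; rewrite in_setD1 [in LHS]inE.
    case Hv: (v \in verts_t t); rewrite ?andbF ?andbT //.
    rewrite Evc; congr negb; apply/eqP/eqP => [H|->] //.
    by apply: Hinj.
  have HS3 : S t \in [set S in powerset (verts_t t) | #|S| == 3].
    rewrite inE powersetE ES subsetDl /=.
    by move: (cardsD1 vc (verts_t t)); rewrite H4 Hvc add1n => -[->].
  case: (Hf t) => _ Him _.
  rewrite -Him in HS3; case/imsetP: HS3 => f Hft' Ef.
  by exists f; rewrite /R -Ef eqxx andbT; move: Hft'; rewrite inE.
pose Fs := [set f : fac D | odd #|[set t in Om | R t f]|].
exists Fs; split.
  move=> f; rewrite inE => Hodd.
  case: (set_0Vmem [set t in Om | R t f]) => [E0|[t]].
    by move: Hodd; rewrite E0 cards0.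
  rewrite inE => /andP[_ /andP[_ /eqP Ef]].
  apply/forallP => v; apply/implyP; rewrite Ef inE => /andP[_ ->] //.
move=> e Hce.
have key : forall t f, R t f -> e_in_t e t = e_in_f e f.
  move=> t f Rtf; have := Rtf; case/andP => ft /eqP Ef.
  case: (Hf t) => _ _ H3; rewrite (H3 e f ft).
  case Het: (e_in_t e t) => //=.
  apply/esym/subsetP => v Hv; rewrite Ef inE; apply/andP; split.
    by rewrite inE; apply/existsP; exists e; move: Hv; rewrite inE Het => ->.
  by move/forallP: Hce => /(_ v) /implyP; apply.
rewrite /tc_syndrome /cc_syndrome.
transitivity (odd (\sum_f (e_in_f e f * #|[set t in Om | R t f]|))).
  rewrite cardsum odd_sum_odd [in RHS]odd_sum_odd; congr odd.
  apply: eq_bigr => f _; rewrite oddM !inE.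
  by rewrite !oddb andbC.
congr odd.
rewrite [in RHS]cardsum.
transitivity (\sum_f \sum_t (e_in_f e f * ((t \in Om) && R t f))).
  apply: eq_bigr => f _; rewrite cardsum big_distrr /=.
  by apply: eq_bigr => t _; rewrite inE.
rewrite exchange_big /=; apply: eq_bigr => t _.
case: (exR t) => f0 R0.
rewrite (bigD1 f0) //= big1 ?addn0.
  rewrite inE (key t f0 R0) R0 andbT.
  by case: (e_in_f e f0); case: (t \in Om).
move=> f Hf0; case Rf: (R t f); last by rewrite andbF muln0.
by move: Hf0; rewrite (uniqR t f f0 Rf R0) eqxx.
Qed.
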